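(* Let $q$ be a real number with $|q|<1$, let $\mathcal{A}$ be the algebra of linear operators on $\mathbb{C}[x,s]$, and let $A,B\in\mathcal{A}$ satisfy $BA=qAB$. Then, as an identity of formal power series in a central indeterminate $z$ with coefficients in $\mathcal{A}$, $$e_{q^2}\big(z(A+B)^2\big)=e_{q^2}(zA^2)\,e_q(zAB)\,e_{q^2}(zB^2).$$
   Context: For $|q|<1$, $(x;q)_n=\prod_{j=0}^{n-1}(1-q^jx)$, and $e_q(w)=\sum_{n\ge0}\frac{w^n}{(q;q)_n}$ (interpreted as a formal power series; for an operator argument $w=zC$ this is $\sum_{n\ge 0} \frac{z^nC^n}{(q;q)_n}$). *)

(* Defs.v *)
From HB Require Import structures.
From mathcomp Require Import all_boot all_order all_algebra.
Set Implicit Arguments. Unset Strict Implicit. Unset Printing Implicit Defensive.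
Import Order.TTheory GRing.Theory Num.Theory.
Local Open Scope ring_scope.

Definition qpoch (C : pzRingType) (x q : C) (n : nat) : C :=
  \prod_(j < n) (1 - q ^+ j * x).

(* Formal power series in a central indeterminate z with coefficients in
   an algebra A are represented by their coefficient sequences nat -> A. *)

(* e_q(z X) = sum_n z^n X^n / (q;q)_n : coefficient sequence. *)
Definition eq_ser (C : fieldType) (A : algType C) (q : C) (X : A) : nat -> A :=
  fun n => (qpoch q q n)^-1 *: X ^+ n.

Definition ser_mul (C : fieldType) (A : algType C) (f g : nat -> A) : nat -> A :=
  fun n => \sum_(i < n.+1) f i * g (n - i)%N.

(* Main.v *)
Require Import Defs.
From HB Require Import structures.
From mathcomp Require Import all_boot all_order all_algebra.
From mathcomp Require Import ring.
From Stdlib Require Import FunctionalExtensionality.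
Set Implicit Arguments. Unset Strict Implicit. Unset Printing Implicit Defensive.
Import Order.TTheory GRing.Theory Num.Theory.
Local Open Scope ring_scope.


Definition sadd {C : fieldType} {A : algType C} (f g : nat -> A) : nat -> A := fun n => f n + g n.
Definition ssub {C : fieldType} {A : algType C} (f g : nat -> A) : nat -> A := fun n => f n - g n.
Definition ssc {C : fieldType} {A : algType C} (c : C) (f : nat -> A) : nat -> A := fun n => c ^+ n *: f n.
Definition sshift {C : fieldType} {A : algType C} (f : nat -> A) : nat -> A :=
  fun n => if n is m.+1 then f m else 0.
Definition slm {C : fieldType} {A : algType C} (x : A) (f : nat -> A) : nat -> A := fun n => x * f n.
Definition srm {C : fieldType} {A : algType C} (f : nat -> A) (x : A) : nat -> A := fun n => f n * x.

Lemma mulDl {C : fieldType} {A : algType C} (f g h : nat -> A) :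
  ser_mul (sadd f g) h = sadd (ser_mul f h) (ser_mul g h).
Proof. apply: functional_extensionality => n; rewrite /ser_mul /sadd -big_split.
by apply: eq_bigr => i _; rewrite mulrDl. Qed.
Lemma mulBl {C : fieldType} {A : algType C} (f g h : nat -> A) :
  ser_mul (ssub f g) h = ssub (ser_mul f h) (ser_mul g h).
Proof. apply: functional_extensionality => n; rewrite /ser_mul /ssub -sumrB.
by apply: eq_bigr => i _; rewrite mulrBl. Qed.
Lemma mulDr {C : fieldType} {A : algType C} (f g h : nat -> A) :
  ser_mul h (sadd f g) = sadd (ser_mul h f) (ser_mul h g).
Proof. apply: functional_extensionality => n; rewrite /ser_mul /sadd -big_split.
by apply: eq_bigr => i _; rewrite mulrDr. Qed.
Lemma mulBr {C : fieldType} {A : algType C} (f g h : nat -> A) :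
  ser_mul h (ssub f g) = ssub (ser_mul h f) (ser_mul h g).
Proof. apply: functional_extensionality => n; rewrite /ser_mul /ssub -sumrB.
by apply: eq_bigr => i _; rewrite mulrBr. Qed.
Lemma sc_mul {C : fieldType} {A : algType C} (c : C) (f g : nat -> A) :
  ssc c (ser_mul f g) = ser_mul (ssc c f) (ssc c g).
Proof. apply: functional_extensionality => n; rewrite /ser_mul /ssc scaler_sumr.
apply: eq_bigr => i _; rewrite scalerAl -scalerAr.
by rewrite !scalerAl scalerA -exprD subnK // -ltnS. Qed.
Lemma shift_mull {C : fieldType} {A : algType C} (f g : nat -> A) :
  ser_mul (sshift f) g = sshift (ser_mul f g).
Proof. apply: functional_extensionality => -[|n]; rewrite /ser_mul /sshift.
  by rewrite big_ord1 mul0r.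
by rewrite big_ord_recl /= mul0r add0r; apply: eq_bigr => i _; rewrite subSS. Qed.
Lemma shift_mulr {C : fieldType} {A : algType C} (f g : nat -> A) :
  ser_mul f (sshift g) = sshift (ser_mul f g).
Proof. apply: functional_extensionality => -[|n]; rewrite /ser_mul /sshift.
  by rewrite big_ord1 mulr0.
rewrite big_ord_recr /= subnn mulr0 addr0; apply: eq_bigr => i _.
by rewrite subSn // -ltnS. Qed.
Lemma slm_mul {C : fieldType} {A : algType C} (x : A) (f g : nat -> A) :
  slm x (ser_mul f g) = ser_mul (slm x f) g.
Proof. apply: functional_extensionality => n; rewrite /ser_mul /slm mulr_sumr.
by apply: eq_bigr => i _; rewrite mulrA. Qed.
Lemma srm_mul {C : fieldType} {A : algType C} (x : A) (f g : nat -> A) :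
  srm (ser_mul f g) x = ser_mul f (srm g x).
Proof. apply: functional_extensionality => n; rewrite /ser_mul /srm mulr_suml.
by apply: eq_bigr => i _; rewrite mulrA. Qed.
Lemma mid_mul {C : fieldType} {A : algType C} (x : A) (f g : nat -> A) :
  ser_mul (srm f x) g = ser_mul f (slm x g).
Proof. apply: functional_extensionality => n; rewrite /ser_mul /srm /slm.
by apply: eq_bigr => i _; rewrite mulrA. Qed.


Lemma sAl {C : fieldType} {A : algType C} (k : C) (x y : A) : (k *: x) * y = k *: (x * y).
Proof. by rewrite scalerAl. Qed.
Lemma sAr {C : fieldType} {A : algType C} (k : C) (x y : A) : x * (k *: y) = k *: (x * y).
Proof. by rewrite scalerAr. Qed.

Lemma comm_pow {C : fieldType} {A : algType C} (u v : A) (c : C) :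
  u * v = c *: (v * u) -> forall n, u * v ^+ n = c ^+ n *: (v ^+ n * u).
Proof.
move=> h; elim=> [|n IH]; first by rewrite !expr0 mulr1 mul1r scale1r.
by rewrite exprS mulrA h -scalerAl -[v * u * _]mulrA IH -scalerAr scalerA mulrA -!exprS.
Qed.

Lemma comm_powl {C : fieldType} {A : algType C} (u v : A) (c : C) :
  u * v = c *: (v * u) -> forall n, u ^+ n * v = c ^+ n *: (v * u ^+ n).
Proof.
move=> h; elim=> [|n IH]; first by rewrite !expr0 mulr1 mul1r scale1r.
by rewrite exprSr -mulrA h -scalerAr [u ^+ n * (v * u)]mulrA IH -scalerAl scalerA -[v * u ^+ n * u]mulrA -!exprSr -exprS.
Qed.

Lemma pow_neq1 (C : numClosedFieldType) (q : C) : `|q| < 1 ->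
  forall k, (0 < k)%N -> q ^+ k != 1.
Proof.
move=> hq k hk; apply/eqP => h.
have := congr1 (fun x => `|x|) h; rewrite /=; rewrite normrX normr1 => h2.
have := exprn_ilt1 k (normr_ge0 q) hq; rewrite h2 ltxx => /esym.
by rewrite -lt0n hk.
Qed.

Lemma qpochS {C : fieldType} (c : C) n : qpoch c c n.+1 = qpoch c c n * (1 - c ^+ n.+1).
Proof. by rewrite /qpoch big_ord_recr /= exprSr. Qed.

Lemma qpoch_neq0 {C : fieldType} (c : C) : (forall k, (0 < k)%N -> c ^+ k != 1) ->
  forall n, qpoch c c n != 0.
Proof.
move=> hc; elim=> [|n IH]; first by rewrite /qpoch big_ord0 oner_eq0.
by rewrite qpochS mulf_neq0 // subr_eq0 eq_sym hc.
Qed.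

Lemma eq_ser0 {C : fieldType} {A : algType C} (c : C) (v : A) : eq_ser c v 0 = 1.
Proof. by rewrite /eq_ser /qpoch big_ord0 invr1 scale1r expr0. Qed.

Lemma eq_serS {C : fieldType} {A : algType C} (c : C) (v : A) n :
  eq_ser c v n.+1 = (qpoch c c n * (1 - c ^+ n.+1))^-1 *: v ^+ n.+1.
Proof. by rewrite /eq_ser qpochS. Qed.

Lemma fbA {C : fieldType} {A : algType C} (q : C) (a b : A) (hab : b * a = q *: (a * b)) :
  b * a ^+ 2 = q ^+ 2 *: (a ^+ 2 * b).
Proof. exact: comm_pow. Qed.

Lemma fYX {C : fieldType} {A : algType C} (q : C) (a b : A) (hab : b * a = q *: (a * b)) :
  (a * b) * a ^+ 2 = q ^+ 2 *: (a ^+ 2 * (a * b)).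
Proof.
rewrite -mulrA (fbA hab) -scalerAr mulrA mulrA -exprS. by rewrite !exprS !expr0 !mulr1 !mulrA.
Qed.

Lemma fWX {C : fieldType} {A : algType C} (q : C) (a b : A) (hab : b * a = q *: (a * b)) :
  b ^+ 2 * a ^+ 2 = (q ^+ 2) ^+ 2 *: (a ^+ 2 * b ^+ 2).
Proof. exact: (comm_powl (fbA hab)). Qed.

Lemma fWY {C : fieldType} {A : algType C} (q : C) (a b : A) (hab : b * a = q *: (a * b)) :
  b ^+ 2 * (a * b) = q ^+ 2 *: ((a * b) * b ^+ 2).
Proof.
by rewrite mulrA (comm_powl hab) -scalerAl !exprS !expr0 !mulr1 !mulrA.
Qed.

Lemma fYY {C : fieldType} {A : algType C} (q : C) (a b : A) (hab : b * a = q *: (a * b)) :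
  (a * b) * (a * b) = q *: (a ^+ 2 * b ^+ 2).
Proof.
by rewrite -mulrA [b * (a * b)]mulrA hab -scalerAl -scalerAr !mulrA -expr2 -mulrA -expr2.
Qed.

Lemma fZ {C : fieldType} {A : algType C} (q : C) (a b : A) (hab : b * a = q *: (a * b)) :
  (a + b) ^+ 2 = a ^+ 2 + (1 + q) *: (a * b) + b ^+ 2.
Proof.
by rewrite expr2 mulrDl !mulrDr hab scalerDl scale1r -!expr2 !addrA.
Qed.

Lemma F_gen {C : fieldType} {A : algType C} (c : C) (v : A) :
  (forall k, (0 < k)%N -> c ^+ k != 1) ->
  ssub (eq_ser c v) (ssc c (eq_ser c v)) = sshift (slm v (eq_ser c v)).
Proof.
move=> hc; apply: functional_extensionality => -[|n]; rewrite /ssub /ssc /sshift /slm.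
  by rewrite expr0 scale1r subrr.
rewrite -{1}[eq_ser c v n.+1]scale1r -scalerBl eq_serS /eq_ser scalerA -scalerAr -exprS.
have h1 := qpoch_neq0 hc n; have h2 : 1 - c ^+ n.+1 != 0 by rewrite subr_eq0 eq_sym hc.
congr (_ *: _); rewrite invfM mulrCA mulfV // mulr1 //.
Qed.

Lemma F2 {C : fieldType} {A : algType C} (q : C) (Y : A) :
  (forall k, (0 < k)%N -> q ^+ k != 1) ->
  ssub (eq_ser q Y) (ssc (q ^+ 2) (eq_ser q Y)) =
  sadd (sshift (slm ((1 + q) *: Y) (eq_ser q Y)))
       (sshift (sshift (slm (- (q *: (Y * Y))) (eq_ser q Y)))).
Proof.
move=> hq; apply: functional_extensionality => -[|[|n]]; rewrite /ssub /ssc /sshift /slm /sadd.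
- by rewrite expr0 scale1r subrr addr0.
- rewrite addr0 eq_ser0 mulr1 -{1}[eq_ser q Y 1]scale1r -scalerBl eq_serS scalerA.
  rewrite /qpoch big_ord0 mul1r expr1.
  have h2 : 1 - q != 0 by have := hq 1%N isT; rewrite expr1 subr_eq0 eq_sym.
  by congr (_ *: _); rewrite expr1; field.
- rewrite -{1}[eq_ser q Y n.+2]scale1r -scalerBl !eq_serS qpochS /eq_ser scalerA.
  rewrite mulNr -!scalerAl -!scalerAr !scalerA -[Y * Y * _]mulrA -!exprS -scalerBl.
  have h1 := qpoch_neq0 hq n.
  have h2 : 1 - q ^+ n.+1 != 0 by rewrite subr_eq0 eq_sym hq.
  have h3 : 1 - q ^+ n.+2 != 0 by rewrite subr_eq0 eq_sym hq.
  congr (_ *: _).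
  move: h2 h3; rewrite exprAC (exprSr q n.+1); set t := q ^+ n.+1; set Q := qpoch q q n.
  move=> h2 h3; field; by rewrite h1 h2 h3.
Qed.

Lemma K3 {C : fieldType} {A : algType C} (q : C) (a b : A) (hab : b * a = q *: (a * b)) :
  srm (ssc (q ^+ 2) (eq_ser q (a * b))) (b ^+ 2) = slm (b ^+ 2) (eq_ser q (a * b)).
Proof.
apply: functional_extensionality => n; rewrite /srm /ssc /slm /eq_ser.
rewrite sAr (comm_pow (fWY hab)) !sAl !scalerA.
by rewrite mulrC.
Qed.

Lemma KE {C : fieldType} {A : algType C} (q : C) (a b : A) (hab : b * a = q *: (a * b)) :
  (forall k, (0 < k)%N -> (q ^+ 2) ^+ k != 1) ->
  slm ((a + b) ^+ 2) (eq_ser (q ^+ 2) (a ^+ 2)) =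
  sadd (sadd (slm (a ^+ 2) (eq_ser (q ^+ 2) (a ^+ 2)))
             (srm (ssc (q ^+ 2) (eq_ser (q ^+ 2) (a ^+ 2))) ((1 + q) *: (a * b))))
       (sadd (sshift (srm (ssc (q ^+ 2) (eq_ser (q ^+ 2) (a ^+ 2))) (- (q *: ((a * b) * (a * b))))))
             (srm (ssc (q ^+ 2) (eq_ser (q ^+ 2) (a ^+ 2))) (b ^+ 2))).
Proof.
move=> hp; apply: functional_extensionality => n; rewrite /slm /sadd /srm /ssc.
have eY : (1 + q) *: (a * b) * eq_ser (q ^+ 2) (a ^+ 2) n =
   (q ^+ 2) ^+ n *: eq_ser (q ^+ 2) (a ^+ 2) n * ((1 + q) *: (a * b)).
  rewrite /eq_ser !sAl !sAr (comm_pow (fYX hab)) !scalerA.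
  by congr (_ *: _); ring.
have eW : b ^+ 2 * eq_ser (q ^+ 2) (a ^+ 2) n =
   sshift (fun n => (q ^+ 2) ^+ n *: eq_ser (q ^+ 2) (a ^+ 2) n * - (q *: (a * b * (a * b)))) n
   + (q ^+ 2) ^+ n *: eq_ser (q ^+ 2) (a ^+ 2) n * b ^+ 2.
  clear eY; case: n => [|m] /=.
    by rewrite eq_ser0 expr0 !scale1r mulr1 mul1r add0r.
  rewrite (fYY hab) !eq_serS /eq_ser sAr (comm_pow (fWX hab)) mulrN.
  rewrite !sAl !sAr !scalerA mulrA -exprSr -scaleNr -scalerDl.
  have h1 := qpoch_neq0 hp m.
  have h2 : 1 - (q ^+ 2) ^+ m.+1 != 0 by rewrite subr_eq0 eq_sym hp.
  congr (_ *: _); rewrite (exprAC (q ^+ 2) 2 m.+1); move: h1 h2; rewrite (exprS (q ^+ 2) m).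
  set s := (q ^+ 2) ^+ m; set Q := qpoch _ _ m; set p := q ^+ 2.
  move=> h1 h2; rewrite -(mulrA _ q q) -expr2 -/p; clearbody p s Q; field; by rewrite h1 h2.
rewrite (fZ hab) !mulrDl eY eW.
by rewrite !addrA.
Qed.

Lemma mul_diff {C : fieldType} {A : algType C} (f g f' g' : nat -> A) :
  ssub (ser_mul f g) (ser_mul f' g') = sadd (ser_mul (ssub f f') g) (ser_mul f' (ssub g g')).
Proof.
rewrite mulBl mulBr; apply: functional_extensionality => n; rewrite /ssub /sadd.
by rewrite addrA subrK.
Qed.

Lemma shiftD {C : fieldType} {A : algType C} (f g : nat -> A) :
  sshift (sadd f g) = sadd (sshift f) (sshift g).
Proof. by apply: functional_extensionality => -[|n]; rewrite /sshift /sadd ?addr0. Qed.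

Lemma ssub_eq {C : fieldType} {A : algType C} (f g s : nat -> A) :
  ssub f g = s -> g = ssub f s.
Proof.
move=> <-; apply: functional_extensionality => n; rewrite /ssub.
by rewrite opprB addrC subrK.
Qed.

Lemma Hstep_abs {C : fieldType} {A : algType C} (p : C) (X Y' V W Z : A) (e1 e2 : nat -> A)
 (F1 : ssub e1 (ssc p e1) = sshift (slm X e1))
 (F2 : ssub e2 (ssc p e2) = sadd (sshift (slm Y' e2)) (sshift (sshift (slm V e2))))
 (K3 : srm (ssc p e2) W = slm W e2)
 (KE : slm Z e1 = sadd (sadd (slm X e1) (srm (ssc p e1) Y'))
                       (sadd (sshift (srm (ssc p e1) V)) (srm (ssc p e1) W))) :
 sadd (ssub (ser_mul e1 e2) (ssc p (ser_mul e1 e2))) (sshift (srm (ssc p (ser_mul e1 e2)) W))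
  = sshift (slm Z (ser_mul e1 e2)).
Proof.
rewrite sc_mul mul_diff F1 F2 srm_mul K3 -mid_mul slm_mul KE.
rewrite mulDr !shift_mulr -!mid_mul !mulDl !shift_mull !shiftD.
by apply: functional_extensionality => n; rewrite /sadd !addrA.
Qed.

Lemma Gstep_abs {C : fieldType} {A : algType C} (p : C) (W Z : A) (H e3 : nat -> A)
 (F3 : ssub e3 (ssc p e3) = sshift (slm W e3))
 (HS : sadd (ssub H (ssc p H)) (sshift (srm (ssc p H) W)) = sshift (slm Z H)) :
 ssub (ser_mul H e3) (ssc p (ser_mul H e3)) = sshift (slm Z (ser_mul H e3)).
Proof.
rewrite sc_mul (ssub_eq F3) mulBr shift_mulr -mid_mul slm_mul -!shift_mull -HS.
rewrite mulDl mulBl shift_mull.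
by apply: functional_extensionality => n; rewrite /ssub /sadd opprD opprK addrA.
Qed.

Lemma Final_abs {C : fieldType} {A : algType C} (p : C) (Z : A) (G : nat -> A)
 (hp : forall k, (0 < k)%N -> p ^+ k != 1) (G0 : G 0%N = 1)
 (GS : ssub G (ssc p G) = sshift (slm Z G)) : forall n, G n = eq_ser p Z n.
Proof.
elim=> [|n IH]; first by rewrite G0 eq_ser0.
have := congr1 (fun f => f n.+1) GS; rewrite /ssub /ssc /sshift /slm => h.
have h2 : 1 - p ^+ n.+1 != 0 by rewrite subr_eq0 eq_sym hp.
have e : (1 - p ^+ n.+1) *: G n.+1 = (qpoch p p n)^-1 *: Z ^+ n.+1.
  by rewrite scalerBl scale1r h IH /eq_ser sAr -exprS.
rewrite -(scalerK h2 (G n.+1)) e scalerA eq_serS invfM mulrC //.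
Qed.

Theorem lemma1p1 (C : numClosedFieldType) (A : algType C) (q : C)
    (hqreal : q \is Num.real) (hq : `|q| < 1)
    (a b : A) (hab : b * a = q *: (a * b)) :
  forall n : nat,
    eq_ser (q ^+ 2) ((a + b) ^+ 2) n =
    ser_mul (ser_mul (eq_ser (q ^+ 2) (a ^+ 2)) (eq_ser q (a * b)))
            (eq_ser (q ^+ 2) (b ^+ 2)) n.
Proof.
have hq1 := pow_neq1 hq.
have hp1 : forall k, (0 < k)%N -> (q ^+ 2) ^+ k != 1.
  by move=> k hk; rewrite -exprM; apply: hq1; rewrite muln_gt0.
move=> n; symmetry; apply: (Final_abs hp1).
  by rewrite /ser_mul !big_ord1 /= !eq_ser0 !mulr1.
apply: Gstep_abs; first exact: F_gen.
apply: Hstep_abs.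
- exact: F_gen.
- exact: F2.
- exact: K3.
- exact: KE.
Qed.
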